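(* Let $\mathcal{H}$ be a complex Hilbert space of finite dimension $n\geq 2$, $m\geq 2$, and let $\rho$ be a density operator on $\mathcal{H}^{\otimes m}$. If $\rho$ is in symmetric state consensus (SSC), then $\rho$ is in reduced state consensus (RSC); and if $\rho$ is in RSC, then $\rho$ is in $\sigma$-expectation consensus ($\sigma$EC) for every operator $\sigma$ on $\mathcal{H}$. The converse implications do not hold in general: there exist (e.g. for $m=3$, $n=2$, $\sigma=\mathrm{diag}(1,-1)$) states that are RSC but not SSC, and states that are $\sigma$EC but not RSC.
   Context: For $X$ an operator on $\mathcal{H}$, $X^{(i)}=I^{\otimes(i-1)}\otimes X\otimes I^{\otimes(m-i)}$. For a permutation $\pi$ of $\{1,\dots,m\}$, $U_\pi$ is the unitary on $\mathcal{H}^{\otimes m}$ with $U_\pi(X_1\otimes\cdots\otimes X_m)U_\pi^\dagger=X_{\pi(1)}\otimes\cdots\otimes X_{\pi(m)}$ for all operators $X_i$. Definitions: $\rho$ is $\sigma$EC if $\mathrm{Tr}(\sigma^{(1)}\rho)=\cdots=\mathrm{Tr}(\sigma^{(m)}\rho)$; $\rho$ is RSC if the reduced states $\bar\rho_k=\mathrm{Tr}_{\bigotimes_{j\neq k}\mathcal{H}_j}(\rho)$ (partial trace over all factors except the $k$-th) satisfy $\bar\rho_1=\cdots=\bar\rho_m$; $\rho$ is SSC if $U_\pi\rho U_\pi^\dagger=\rho$ for every permutation $\pi$. *)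

(* Defs.v *)
From HB Require Import structures.
From mathcomp Require Import all_boot all_order all_algebra.
From mathcomp Require Import fingroup perm.
From mathcomp Require Import sesquilinear spectral.
Set Implicit Arguments. Unset Strict Implicit. Unset Printing Implicit Defensive.
Import GRing.Theory Num.Theory.
Local Open Scope ring_scope.
Local Open Scope sesquilinear_scope.

(* Complex scalars: an arbitrary numClosedFieldType C (e.g. the complex
   numbers); H = C^n with standard basis indexed by 'I_n. *)

(* Basis labels of H^{(x)m}: functions s : 'I_m -> 'I_n, i.e. e_{s 0} (x) ... (x) e_{s (m-1)}. *)
Definition tidx (m n : nat) := {ffun 'I_m -> 'I_n}.
Notation tdim m n := #|{: tidx m n}|.

Section Tensor.
Variable C : numClosedFieldType.
Variables m n : nat.

Definition lab (a : 'I_(tdim m n)) : tidx m n := enum_val a.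

Definition tentry (A : 'M[C]_(tdim m n)) (s t : tidx m n) : C :=
  A (enum_rank s) (enum_rank t).

Definition tensor (X : 'I_m -> 'M[C]_n) : 'M[C]_(tdim m n) :=
  \matrix_(a, b) \prod_(i < m) X i (lab a i) (lab b i).

Definition embed (i : 'I_m) (X : 'M[C]_n) : 'M[C]_(tdim m n) :=
  tensor (fun j => if j == i then X else 1%:M).

(* U_pi : e_s |-> e_{s o pi^-1}; it satisfies
   U_pi (X_1 (x) .. (x) X_m) U_pi^* = X_{pi 1} (x) .. (x) X_{pi m}. *)
Definition permU (pi : 'S_m) : 'M[C]_(tdim m n) :=
  \matrix_(a, b) (lab b == [ffun j => lab a ((pi^-1)%g j)])%:R.

(* reduced state on the k-th factor: partial trace over all other factors *)
Definition reduced (rho : 'M[C]_(tdim m n)) (k : 'I_m) : 'M[C]_n :=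
  \matrix_(x, y) \sum_(s : tidx m n | s k == x) \sum_(t : tidx m n |
      (t k == y) && [forall j, (j != k) ==> (s j == t j)]) tentry rho s t.

Definition density (rho : 'M[C]_(tdim m n)) : Prop :=
  [/\ rho ^t* = rho,
      (forall v : 'rV[C]_(tdim m n), 0 <= (v *m rho *m v ^t*) 0 0)
    & \tr rho = 1].

Definition sigmaEC (sigma : 'M[C]_n) (rho : 'M[C]_(tdim m n)) : Prop :=
  forall i j : 'I_m, \tr (embed i sigma *m rho) = \tr (embed j sigma *m rho).

Definition RSC (rho : 'M[C]_(tdim m n)) : Prop :=
  forall k l : 'I_m, reduced rho k = reduced rho l.

Definition SSC (rho : 'M[C]_(tdim m n)) : Prop :=
  forall pi : 'S_m, permU pi *m rho *m (permU pi) ^t* = rho.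

End Tensor.

Definition pauliZ (C : numClosedFieldType) : 'M[C]_2 :=
  \matrix_(i, j) (if i == j then (if i == 0 then 1 else -1) else 0).

(* Main.v *)
Require Import Defs.
From HB Require Import structures.
From mathcomp Require Import all_boot all_order all_algebra.
From mathcomp Require Import fingroup perm.
From mathcomp Require Import sesquilinear spectral ring.
Set Implicit Arguments. Unset Strict Implicit. Unset Printing Implicit Defensive.
Import GRing.Theory Num.Theory.
Local Open Scope ring_scope.
Local Open Scope sesquilinear_scope.

Section Gen.
Variable C : numClosedFieldType.
Variables m n : nat.
Local Notation T := (tidx m n).
Local Notation N := (tdim m n).
Local Notation M := ('M[C]_(tdim m n)).
Local Notation lb := (@lab m n).

Lemma sumT (F : T -> C) : \sum_(a < N) F (lb a) = \sum_s F s.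
Proof.
rewrite (reindex (@enum_rank _)) /=.
  by apply: eq_bigr => s _; rewrite /lab enum_rankK.
by exists enum_val => x _; rewrite ?enum_rankK ?enum_valK.
Qed.

Lemma mxT (rho : M) a b : rho a b = tentry rho (lb a) (lb b).
Proof. by rewrite /tentry /lab !enum_valK. Qed.

Lemma labK s : lb (enum_rank s) = s.
Proof. by rewrite /lab enum_rankK. Qed.

Definition act (pi : 'S_m) (s : T) : T := [ffun j => s ((pi^-1)%g j)].

Lemma sum_ind (X : T) (g : T -> C) :
  \sum_s (s == X)%:R * g s = g X.
Proof.
rewrite (bigD1 X) //= eqxx mul1r big1 ?addr0 // => s /negbTE ->.
by rewrite mul0r.
Qed.

Lemma permU_conj pi (rho : M) s t :
  tentry (permU C n pi *m rho *m (permU C n pi)^t*) s t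
  = tentry rho (act pi s) (act pi t).
Proof.
rewrite {1}/tentry mxE.
under eq_bigr do rewrite !mxE mulr_suml.
rewrite exchange_big /=.
transitivity (\sum_(j < N) (lb j == act pi s)%:R *
    \sum_(i < N) tentry rho (lb j) (lb i) * (lb i == act pi t)%:R).
  apply: eq_bigr => j _; rewrite mulr_sumr; apply: eq_bigr => i _.
  rewrite !labK conjC_nat /act -mxT.
  idtac.
  by rewrite mxE labK mulrA.
rewrite (sumT (fun j => (j == act pi s)%:R *
    \sum_(i < N) tentry rho j (lb i) * (lb i == act pi t)%:R)) sum_ind.
rewrite (sumT (fun i => tentry rho (act pi s) i * (i == act pi t)%:R)).
by under eq_bigr do rewrite mulrC; rewrite sum_ind.
Qed.

Definition agree (k : 'I_m) (s t : T) := [forall j, (j != k) ==> (s j == t j)].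
Definition upd (s : T) (k : 'I_m) (y : 'I_n) : T :=
  [ffun j => if j == k then y else s j].

Lemma red_sum (F : T -> C) (s : T) (k : 'I_m) (y : 'I_n) :
  \sum_(t : T | (t k == y) && [forall j, (j != k) ==> (s j == t j)]) F t
  = F (upd s k y).
Proof.
apply: big_pred1 => t /=; apply/andP/eqP => [[/eqP tk /forallP H]|->].
  apply/ffunP => j; rewrite ffunE; case: eqP => [->|/eqP jk]; first by [].
  by rewrite (eqP (implyP (H j) jk)).
rewrite ffunE !eqxx; split => //; apply/forallP => j; apply/implyP => jk.
by rewrite ffunE (negbTE jk).
Qed.

Lemma reducedE (rho : M) k x y :
  reduced rho k x y = \sum_(s : T | s k == x) tentry rho s (upd s k y).
Proof. by rewrite /reduced mxE; apply: eq_bigr => s _; rewrite red_sum. Qed.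

Lemma act_inj pi : injective (act pi).
Proof.
move=> s t /ffunP H; apply/ffunP => j.
by have := H (pi j); rewrite !ffunE permK.
Qed.

Lemma SSC_inv (rho : M) : SSC rho -> forall pi s t,
  tentry rho (act pi s) (act pi t) = tentry rho s t.
Proof. by move=> H pi s t; rewrite -permU_conj H. Qed.

Lemma SSC_RSC (rho : M) : SSC rho -> RSC rho.
Proof.
move=> H k l; apply/matrixP => x y; rewrite !reducedE.
pose tau := tperm k l.
rewrite (reindex_inj (@act_inj tau)) /=.
apply: eq_big => s.
  by rewrite ffunE tpermV tpermL.
move=> _.
have -> : upd (act tau s) k y = act tau (upd s l y).
  apply/ffunP => j; rewrite !ffunE tpermV.
  have [->|jk] := eqVneq j k; first by rewrite tpermL eqxx.
  case: (eqVneq (tau j) l) => [E|]; last by [].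
  by move: jk; rewrite -(tpermK k l j) -/tau E tpermR eqxx.
by rewrite SSC_inv.
Qed.

Lemma prod_embed (i : 'I_m) (sigma : 'M[C]_n) (s t : T) :
  \prod_(j < m) (if j == i then sigma else 1%:M) (t j) (s j)
  = sigma (t i) (s i) * (agree i s t)%:R.
Proof.
rewrite (bigD1 i) //= eqxx; congr (_ * _).
rewrite (eq_bigr (fun j => (t j == s j)%:R)); last by move=> j /negbTE ji; rewrite ji mxE.
rewrite /agree; case: forallP => [H|H].
  by apply: big1 => j ji; rewrite (eqP (implyP (H j) ji)) eqxx.
have [j] : exists j, ~~ ((j != i) ==> (s j == t j)).
  by apply/existsP; rewrite -negb_forall; apply/forallP.
rewrite negb_imply => /andP[ji sj].
by rewrite (bigD1 j ji) /= eq_sym (negbTE sj) mul0r.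
Qed.

Lemma sum_agree (g : T -> C) (s : T) (i : 'I_m) :
  \sum_t g t * (agree i s t)%:R = \sum_y g (upd s i y).
Proof.
transitivity (\sum_(t | agree i s t) g t).
  by rewrite [RHS]big_mkcond; apply: eq_bigr => t _; case: agree; rewrite ?mulr1 ?mulr0.
rewrite (partition_big (fun t : T => t i) predT) //=.
apply: eq_bigr => y _; rewrite -red_sum; apply: eq_bigl => t.
by rewrite andbC.
Qed.

Lemma trace_embed (i : 'I_m) (sigma : 'M[C]_n) (rho : M) :
  \tr (embed i sigma *m rho) =
  \sum_x \sum_y sigma y x * reduced rho i x y.
Proof.
rewrite mxtrace_mulC /mxtrace.
transitivity (\sum_s \sum_t tentry rho s t * (sigma (t i) (s i) * (agree i s t)%:R)).
  rewrite -(sumT (fun s => \sum_t tentry rho s t * (sigma (t i) (s i) * (agree i s t)%:R))).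
  apply: eq_bigr => a _; rewrite mxE.
  rewrite -(sumT (fun t => tentry rho (lb a) t * (sigma (t i) (lb a i) * (agree i (lb a) t)%:R))).
  apply: eq_bigr => b _; rewrite mxT mxE prod_embed //.
transitivity (\sum_s \sum_y tentry rho s (upd s i y) * sigma y (s i)).
  apply: eq_bigr => s _; under eq_bigr do rewrite mulrA.
  by rewrite sum_agree; apply: eq_bigr => y _; rewrite ffunE eqxx.
rewrite (partition_big (fun s : T => s i) predT) //=.
apply: eq_bigr => x _; rewrite exchange_big /=.
apply: eq_bigr => y _; rewrite reducedE mulr_sumr.
by apply: eq_bigr => s /eqP <-; rewrite mulrC.
Qed.

Lemma RSC_EC (rho : M) : RSC rho -> forall sigma, sigmaEC sigma rho.
Proof. by move=> H sigma i j; rewrite !trace_embed (H i j). Qed.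

Lemma tcE p q (A : 'M[C]_(p, q)) i j : (A ^t* ) i j = (A j i)^*.
Proof. by rewrite !mxE. Qed.

Lemma cM (x y : C) : (x * y)^* = x^* * y^*.
Proof. exact: rmorphM. Qed.
Lemma cV (x : C) : (x^-1)^* = (x^*)^-1.
Proof. exact: fmorphV. Qed.

Lemma cS (I : finType) (F : I -> C) : (\sum_s F s)^* = \sum_s (F s)^*.
Proof. exact: rmorph_sum. Qed.

Definition mkop (f : T -> T -> C) : M := \matrix_(a, b) f (lb a) (lb b).

Lemma mkopE f s t : tentry (mkop f) s t = f s t.
Proof. by rewrite /tentry mxE !labK. Qed.

Lemma lb_eq a b : (lb a == lb b) = (a == b).
Proof. by apply/eqP/eqP => [/enum_val_inj|->]. Qed.

Lemma diag_density (w : T -> C) :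
  (forall s, 0 <= w s) -> (forall s, (w s)^* = w s) -> \sum_s w s = 1 ->
  density (mkop (fun s t => (s == t)%:R * w s)).
Proof.
move=> w0 wc w1; split.
- apply/matrixP => a b; rewrite tcE !mxE cM conjC_nat wc eq_sym !lb_eq.
  by case: eqVneq => [->|]; rewrite ?mul0r ?mul1r.
- move=> v; rewrite mxE; apply: sumr_ge0 => b _; rewrite !mxE.
  rewrite (bigD1 b) //= big1 ?addr0; last first.
    by move=> a ab; rewrite mxE lb_eq (negbTE ab) mul0r mulr0.
  rewrite mxE eqxx mul1r -mulrA mulrCA; apply: mulr_ge0 => //.
  exact: mul_conjC_ge0.
- apply: (etrans _ w1); rewrite /mxtrace -(sumT w); apply: eq_bigr => a _.
  by rewrite mxE eqxx mul1r.
Qed.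

Lemma pure_density (u : T -> C) (c := \sum_s u s * (u s)^*) :
  c != 0 -> density (mkop (fun s t => c^-1 * (u s * (u t)^*))).
Proof.
move=> c0.
have cc : c^* = c.
  rewrite /c cS; apply: eq_bigr => s _.
  by rewrite cM conjCK mulrC.
have cge : 0 <= c by apply: sumr_ge0 => s _; apply: mul_conjC_ge0.
split.
- apply/matrixP => a b; rewrite tcE !mxE !cM cV cc conjCK.
  by rewrite [_ * u _]mulrC.
- move=> v; rewrite mxE.
  have -> : \sum_j (v *m mkop (fun s t => c^-1 * (u s * (u t)^*))) 0 j *
      (v ^t* ) j 0 = c^-1 * ((\sum_a v 0 a * u (lb a)) *
        (\sum_a v 0 a * u (lb a))^*).
    rewrite cS !mulr_sumr; apply: eq_bigr => b _.
    rewrite tcE mxE !mulr_suml mulr_sumr; apply: eq_bigr => a _.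
    rewrite !mxE cM; ring.
  by apply: mulr_ge0; rewrite ?invr_ge0 // mul_conjC_ge0.
- rewrite /mxtrace.
  under eq_bigr do rewrite mxE.
  rewrite (sumT (fun s => c^-1 * (u s * (u s)^*))) -mulr_sumr.
  by rewrite mulVf.
Qed.

Lemma upd_eq (s : T) k y : (s == upd s k y) = (s k == y).
Proof.
apply/eqP/eqP => [H|<-]; first by rewrite {1}H ffunE eqxx.
by apply/ffunP => j; rewrite ffunE; case: eqP => // ->.
Qed.

Lemma sum_red_diag (rho : M) k : \sum_x reduced rho k x x = \tr rho.
Proof.
transitivity (\sum_x \sum_(s : T | s k == x) tentry rho s s).
  apply: eq_bigr => x _; rewrite reducedE; apply: eq_bigr => s sk.
  suff -> : upd s k x = s by [].
  by apply/esym/eqP; rewrite upd_eq.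
rewrite /mxtrace [RHS](eq_bigr (fun a => tentry rho (lb a) (lb a))); last first.
  by move=> a _; rewrite mxT.
rewrite (sumT (fun s => tentry rho s s)).
by rewrite [RHS](partition_big (fun s : T => s k) predT).
Qed.

Lemma red_diag (w : T -> C) k x y :
  reduced (mkop (fun s t => (s == t)%:R * w s)) k x y
  = (x == y)%:R * \sum_(s : T | s k == x) w s.
Proof.
rewrite reducedE mulr_sumr; apply: eq_bigr => s /eqP sk.
by rewrite mkopE upd_eq sk.
Qed.
End Gen.

Section Ex.
Variable C : numClosedFieldType.
Local Notation T := (tidx 3 2).
Local Notation M := ('M[C]_(tdim 3 2)).

Definition i0 : 'I_3 := @Ordinal 3 0 isT.
Definition i1 : 'I_3 := @Ordinal 3 1 isT.
Definition i2 : 'I_3 := @Ordinal 3 2 isT.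
Definition b0 : 'I_2 := @Ordinal 2 0 isT.
Definition b1 : 'I_2 := @Ordinal 2 1 isT.

Lemma I2_cases (x : 'I_2) : x = b0 \/ x = b1.
Proof. by case: x => [[|[|k]] Hk]; [left|right|]; try apply: val_inj. Qed.

Lemma two_neq0 : (2 : C) != 0.
Proof. by rewrite pnatr_eq0. Qed.

Lemma sum_pt (X : T) (P : pred T) : \sum_(s | P s) ((s == X)%:R : C) = (P X)%:R.
Proof.
rewrite big_mkcond (eq_bigr (fun s => (s == X)%:R * (P X)%:R)).
  by rewrite (sum_ind X (fun _ => (P X)%:R)).
move=> s _; case: eqVneq => [->|_]; case: (P _) => /=;
  by rewrite ?mulr1 ?mulr0 ?mul0r.
Qed.

Definition s1 : T := [ffun j => if j == i0 then b1 else b0].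
Definition s2 : T := [ffun j => if j == i0 then b0 else b1].
Definition w (s : T) : C := 2^-1 * ((s == s1)%:R + (s == s2)%:R).
Definition rho2 : M := mkop (fun s t => (s == t)%:R * w s).

Lemma sum_w_cond k x : \sum_(s : T | s k == x) w s = 2^-1.
Proof.
rewrite -mulr_sumr big_split /= (sum_pt s1 (fun s : T => s k == x)).
rewrite (sum_pt s2 (fun s : T => s k == x)) !ffunE.
case: (k == i0); case: (I2_cases x) => ->; rewrite /= ?add0r ?addr0 ?mulr1 //.
Qed.

Lemma ex2 : density rho2 /\ RSC rho2 /\ ~ SSC rho2.
Proof.
split; [|split].
- apply: diag_density.
  + move=> s; apply: mulr_ge0; rewrite ?invr_ge0 ?ler0n //.
    by apply: addr_ge0; rewrite ler0n.
  + move=> s; rewrite /w cM cV !rmorphD /= !conjC_nat //.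
    by rewrite conjC1.
  + rewrite /w -mulr_sumr big_split /= (sum_pt s1 xpredT) (sum_pt s2 xpredT) /=.
    by rewrite mulVf // two_neq0.
- by move=> k l; apply/matrixP => x y; rewrite !red_diag !sum_w_cond.
- move=> H; pose pi := tperm i0 i1.
  have := SSC_inv H pi s1 s1; rewrite !mkopE eqxx !mul1r /w.
  have -> : (act pi s1 == s1) = false.
    by apply/negbTE/eqP => /ffunP /(_ i0); rewrite !ffunE tpermV tpermL.
  have -> : (act pi s1 == s2) = false.
    by apply/negbTE/eqP => /ffunP /(_ i2); rewrite !ffunE tpermV tpermD.
  have -> : (s1 == s2) = false.
    by apply/negbTE/eqP => /ffunP /(_ i0); rewrite !ffunE.
  rewrite eqxx /= !addr0 mul1r mulr0 mulr1 => /esym/eqP; rewrite invr_eq0.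
  by rewrite (negbTE two_neq0).
Qed.

Definition u (s : T) : C := (s i1 == s i2)%:R.
Definition c3 : C := \sum_s u s * (u s)^*.
Definition rho3 : M := mkop (fun s t => c3^-1 * (u s * (u t)^*)).

Lemma c3_neq0 : c3 != 0.
Proof.
pose s0 : T := [ffun _ => b0].
rewrite /c3 (bigD1 s0) //= paddr_eq0; last 2 first.
- exact: mul_conjC_ge0.
- by apply: sumr_ge0 => s _; exact: mul_conjC_ge0.
by rewrite /u !ffunE eqxx /= conjC1 mulr1 oner_eq0.
Qed.

Lemma r3E s t : tentry rho3 s t = c3^-1 * (u s * u t).
Proof. by rewrite mkopE /u conjC_nat. Qed.

Definition flip (x : 'I_2) : 'I_2 := if x == b0 then b1 else b0.
Lemma flipK : involutive flip.
Proof. by move=> x; case: (I2_cases x) => ->. Qed.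
Lemma flip_eq x y : (flip x == y) = (x == flip y).
Proof. by case: (I2_cases x) => ->; case: (I2_cases y) => ->. Qed.

Definition comp (s : T) : T := [ffun j => flip (s j)].
Lemma comp_inj : injective comp.
Proof.
move=> s t /ffunP H; apply/ffunP => j.
by have := H j; rewrite !ffunE => /(can_inj flipK).
Qed.

Lemma u_comp s : u (comp s) = u s.
Proof. by rewrite /u !ffunE (inj_eq (can_inj flipK)). Qed.

Lemma red3_flip i x y :
  reduced rho3 i (flip x) (flip y) = reduced rho3 i x y.
Proof.
rewrite !reducedE (reindex_inj comp_inj) /=.
apply: eq_big => s; first by rewrite ffunE flip_eq flipK.
move=> _.
have -> : upd (comp s) i (flip y) = comp (upd s i y).
  by apply/ffunP => j; rewrite !ffunE; case: (j == i).
by rewrite !r3E !u_comp.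
Qed.

Lemma ex3 : density rho3 /\ sigmaEC (pauliZ C) rho3 /\ ~ RSC rho3.
Proof.
have D : density rho3 by apply: pure_density; exact: c3_neq0.
split; [exact: D | split].
- suff H0 : forall i, \tr (embed i (pauliZ C) *m rho3) = 0.
    by move=> i j; rewrite !H0.
  move=> i; rewrite trace_embed.
  set S := (X in X = 0).
  have HS : S = - S.
    rewrite {1}/S (reindex_inj (can_inj flipK)) /= /S -sumrN.
    apply: eq_bigr => x _; rewrite (reindex_inj (can_inj flipK)) /= -sumrN.
    apply: eq_bigr => y _; rewrite red3_flip -mulNr; congr (_ * _).
    rewrite !mxE.
    by case: (I2_cases x) => ->; case: (I2_cases y) => ->; rewrite /= ?oppr0 ?opprK.
  have : S *+ 2 == 0 by rewrite mulr2n {2}HS subrr.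
  by rewrite mulrn_eq0 => /eqP.
- move=> H; have := H i0 i1 => /matrixP /(_ b0 b1).
  have -> : reduced rho3 i1 b0 b1 = 0.
    rewrite reducedE; apply: big1 => s /eqP sb.
    rewrite r3E /u !ffunE /= sb.
    by case: (I2_cases (s i2)) => ->; rewrite /= ?mul0r ?mulr0.
  have -> : reduced rho3 i0 b0 b1 = reduced rho3 i0 b0 b0.
    rewrite !reducedE; apply: eq_bigr => s _.
    by rewrite !r3E /u !ffunE.
  move=> /eqP; apply/negP.
  have E : reduced rho3 i0 b1 b1 = reduced rho3 i0 b0 b0.
    by rewrite -red3_flip.
  apply/eqP => Z.
  have := sum_red_diag rho3 i0.
  rewrite (eq_bigr (fun _ => 0)); last first.
    by move=> x _; case: (I2_cases x) => ->; rewrite ?E Z.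
  rewrite big1 //; case: D => _ _ -> /eqP; rewrite eq_sym oner_eq0.
  by [].
Qed.
End Ex.

Local Close Scope sesquilinear_scope.

Theorem theorem1 (C : numClosedFieldType) :
  (forall (n m : nat), (2 <= n)%N -> (2 <= m)%N ->
     forall rho : 'M[C]_(tdim m n), density rho ->
       (SSC rho -> RSC rho) /\
       (RSC rho -> forall sigma : 'M[C]_n, sigmaEC sigma rho)) /\
  (exists rho : 'M[C]_(tdim 3 2), density rho /\ RSC rho /\ ~ SSC rho) /\
  (exists rho : 'M[C]_(tdim 3 2),
     density rho /\ sigmaEC (pauliZ C) rho /\ ~ RSC rho).
Proof.
split; [|split].
- move=> n m _ _ rho _; split; [exact: SSC_RSC | exact: RSC_EC].
- by exists (rho2 C); exact: ex2.
- by exists (rho3 C); exact: ex3.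
Qed.
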